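(* Let $\$$ be a real-linear involution of $W$ that is either complex-linear or anti-linear. Suppose a commutative formal field theory $\mathcal D\subset\mathcal K$ is invariant under $\sigma(L_+^\uparrow)$. Then $\mathcal D$ is invariant under $C_\$\circ\sigma'(g)$ for all $g\in L_+^\downarrow$ if and only if $\mathcal D$ is $\$$-Hermitian.
   Context: Setting: $M$ real of dimension $d\ge3$ with Lorentzian $\eta$; $L_+^\uparrow$ the identity component of the Lorentz group, $L_+^\downarrow$ the determinant-one time-orientation-reversing component, $L_+=L_+^\uparrow\cup L_+^\downarrow$. $L_+(\mathbb C)$ (complex determinant-one isometries of $M^{\mathbb C}$) is identified with the complexification of $L_+^\uparrow$ and contains $L_+$. $\rho$ is a finite-dimensional real representation of $L_+^\uparrow$ on $V$; $\rho'$ is the representation of $L_+$ on $V$ obtained by restricting the holomorphic extension $\rho^{\mathbb C}$ of $\rho$ to $L_+(\mathbb C)$ (it preserves $V$ on $L_+$); $\omega,\omega'$ likewise for a representation $\omega$ of $L_+^\uparrow$ on $M$. $W=\mathrm{Hom}_{\mathbb R}(V,\mathbb C)$; $\mathcal K=\mathcal F(W\otimes_{\mathbb R}TM)$ is the free non-commutative complex algebra on field symbols $\underline\Phi^\lambda_{\xi_1\cdots\xi_n}=\lambda\otimes(\xi_1\otimes\cdots\otimes\xi_n)$. The classical action induced by $\rho,\omega$ acts by complex-linear algebra automorphisms with $\sigma(g)\underline\Phi^\lambda_{\xi_1\cdots\xi_n}=\underline\Phi^{\lambda\circ\rho(g^{-1})}_{\omega(g)\xi_1\cdots\omega(g)\xi_n}$;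 $\sigma$ is that of $L_+^\uparrow$, $\sigma'$ that of $L_+$ induced by $\rho',\omega'$. A commutative formal field theory is $\mathcal D=c^{-1}(\mathcal D_c)$ with $c\colon\mathcal K\to\mathcal F_c(W\otimes_{\mathbb R}TM)$ the quotient to the free commutative complex algebra and $\mathcal D_c$ a complex affine subspace. $S$ is the complex-linear anti-automorphism of $\mathcal K$ fixing field symbols. $C_\$$ is the unique algebra automorphism of $\mathcal K$ (complex-linear or anti-linear as $\$$ is) with $C_\$(\underline\Phi^\lambda_{\xi_1\cdots\xi_n})=\underline\Phi^{\$(\lambda)}_{\xi_1\cdots\xi_n}$; $\dagger_\$=S\circ C_\$$. $\mathcal D$ is $\$$-Hermitian if $\dagger_\$(\mathcal D)\subseteq\mathcal D$. Invariance means mapping $\mathcal D$ into $\mathcal D$. *)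

(* Defs.v *)
From HB Require Import structures.
From mathcomp Require Import all_boot all_order all_algebra.
Set Implicit Arguments. Unset Strict Implicit. Unset Printing Implicit Defensive.
Import Order.TTheory GRing.Theory Num.Theory.
Local Open Scope ring_scope.

Section Defs.
(* C plays the role of the complex numbers; its real numbers are the
   elements x with x \is Num.real. *)
Variable C : numClosedFieldType.

(** * Minkowski space M = R^d, eta = diag(1,-1,...,-1), index 0 is time. *)
Section Lorentz.
Variable d : nat.

Definition eta : 'M[C]_d :=
  \matrix_(i, j) (if i == j then (if val i == 0%N then 1 else -1) else 0).

Definition entry00 (A : 'M[C]_d) : C := \sum_(i < d | val i == 0%N) A i i.

Definition real_mx (A : 'M[C]_d) : Prop := forall i j, A i j \is Num.real.

Definition LC (A : 'M[C]_d) : Prop := A^T *m eta *m A = eta /\ \det A = 1.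
Definition Lplus (A : 'M[C]_d) : Prop := LC A /\ real_mx A.
Definition Lup (A : 'M[C]_d) : Prop := Lplus A /\ 0 < entry00 A.
Definition Ldown (A : 'M[C]_d) : Prop := Lplus A /\ entry00 A < 0.

Inductive polyfun : ('M[C]_d -> C) -> Prop :=
| pf_const (c : C) : polyfun (fun _ => c)
| pf_coord (i j : 'I_d) : polyfun (fun A => A i j)
| pf_add f g : polyfun f -> polyfun g -> polyfun (fun A => f A + g A)
| pf_mul f g : polyfun f -> polyfun g -> polyfun (fun A => f A * g A).

(* rhoC : L_+(C) -> GL_m(C) is the holomorphic (= regular, polynomial in the
   matrix entries) extension of a real representation rho of L_+^uparrow on
   R^m: it is a group homomorphism on L_+(C), its entries are polynomial
   functions on L_+(C), and it is real-valued on L_+^uparrow. *)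
Definition holo_ext_rep (m : nat) (rhoC : 'M[C]_d -> 'M[C]_m) : Prop :=
  [/\ rhoC 1%:M = 1%:M,
      (forall g h, LC g -> LC h -> rhoC (g *m h) = rhoC g *m rhoC h),
      (forall i j, exists p, polyfun p /\ forall g, LC g -> p g = rhoC g i j)
    & (forall g, Lup g -> forall i j, rhoC g i j \is Num.real)].

(** * The free algebra K = F(W (x)_R TM), V = R^n, W = Hom_R(V,C) = C^n. *)
Variable n : nat.

(* basis letter (a, [:: i1; ..; ik]) stands for the field symbol
   Phi^{e^a}_{e_i1 ... e_ik}, with e^a the dual basis of V and e_i the
   standard basis of M. These span W (x)_R TM over C. *)
Definition letter := ('I_n * seq 'I_d)%type.

Fixpoint seqs_of_len (k : nat) : seq (seq 'I_d) :=
  if k is k'.+1 then [seq i :: s | i <- enum 'I_d, s <- seqs_of_len k']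
  else [:: [::]].

Definition letters_of_len (k : nat) : seq letter :=
  [seq (b, s) | b <- enum 'I_n, s <- seqs_of_len k].

Fixpoint same_shape (w : seq letter) : seq (seq letter) :=
  if w is x :: w' then [seq y :: v | y <- letters_of_len (size x.2), v <- same_shape w']
  else [:: [::]].

(* Elements of K are represented by their coefficient functions on words
   (basis of the free algebra), which must be finitely supported. *)
Definition kelt := seq letter -> C.
Definition finsupp (f : kelt) : Prop :=
  exists s : seq (seq letter), forall w, w \notin s -> f w = 0.

(* Complex-linear (anti = false) or anti-linear (anti = true) algebra
   endomorphism of K induced by the degree-preserving letter map
   x |-> sum_y T y x . y *)
Definition alg_map (anti : bool) (T : letter -> letter -> C) (f : kelt) : kelt :=
  fun w => \sum_(u <- same_shape w)
             (if anti then (f u)^* else f u) * \prod_(p <- zip w u) T p.1 p.2.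

(* classical action sigma(g) induced by rho, omega:
   sigma(g) Phi^lambda_{xi..} = Phi^{lambda o rho(g^-1)}_{omega(g) xi ..} *)
Definition sigma (rho : 'M[C]_d -> 'M[C]_n) (omega : 'M[C]_d -> 'M[C]_d)
    (g : 'M[C]_d) : kelt -> kelt :=
  alg_map false (fun y x =>
     rho (invmx g) x.1 y.1 * \prod_(p <- zip y.2 x.2) omega g p.1 p.2).

(* C_$ : Phi^lambda_xi |-> Phi^{$ lambda}_xi, with lambda in W = 'rV_n
   (lambda_b = lambda(e_b)) *)
Definition Cdollar (anti : bool) (dollar : 'rV[C]_n -> 'rV[C]_n) : kelt -> kelt :=
  alg_map anti (fun y x => dollar (delta_mx 0 x.1) 0 y.1 * (y.2 == x.2)%:R).

(* S : complex-linear anti-automorphism fixing field symbols *)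
Definition Santi (f : kelt) : kelt := fun w => f (rev w).

Definition dagger anti dollar (f : kelt) : kelt := Santi (Cdollar anti dollar f).

(* c : K -> F_c, quotient to the free commutative algebra; an element of F_c
   is represented by a permutation-invariant finitely supported coefficient
   function on words (i.e. a function on multisets of letters). *)
Definition cmap (f : kelt) : kelt := fun u => \sum_(v <- permutations u) f v.

Definition in_Fc (h : kelt) : Prop :=
  finsupp h /\ forall u v, perm_eq u v -> h u = h v.

Definition affine_subspace_Fc (Dc : kelt -> Prop) : Prop :=
  (forall h, Dc h -> in_Fc h) /\
  (forall h1 h2 (t : C), Dc h1 -> Dc h2 -> Dc (fun u => (1 - t) * h1 u + t * h2 u)).

Definition cfft (Dc : kelt -> Prop) : kelt -> Prop :=
  fun f => finsupp f /\ Dc (cmap f).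

Definition preserves (F : kelt -> kelt) (D : kelt -> Prop) : Prop :=
  forall f, D f -> D (F f).

End Lorentz.
End Defs.

(* Main.v *)
Require Import Defs.
From HB Require Import structures.
From mathcomp Require Import all_boot all_order all_algebra zify ring lra.
Set Implicit Arguments. Unset Strict Implicit. Unset Printing Implicit Defensive.
Import Order.TTheory GRing.Theory Num.Theory.
Local Open Scope ring_scope.
From Stdlib Require Import FunctionalExtensionality.

Definition LP (C : numClosedFieldType) (N : nat) (phi : C -> C) : Prop :=
  exists q : {poly C}, (size q <= (N + N).+1)%N /\
    forall z, z != 0 -> phi z * z ^+ N = q.[z].

Lemma LP_ext (C : numClosedFieldType) N (phi psi : C -> C) :
  LP N phi -> (forall z, z != 0 -> phi z = psi z) -> LP N psi.
Proof.
move=> [q [sq hq]] e; exists q; split => // z nz; by rewrite -e // hq.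
Qed.

Lemma LP_mono (C : numClosedFieldType) N M (phi : C -> C) :
  (N <= M)%N -> LP N phi -> LP M phi.
Proof.
move=> le [q [sq hq]]; exists (q * 'X^(M - N)); split.
  apply: leq_trans (size_polyMleq _ _) _; rewrite size_polyXn addnS /=. move: le sq; set k := size q; lia.
move=> z nz; rewrite hornerM hornerXn -hq // -mulrA -exprD subnKC //.
Qed.

Lemma LP_const (C : numClosedFieldType) N (c : C) : LP N (fun _ => c).
Proof.
apply: (@LP_mono _ 0) => //; exists c%:P; split; first exact: size_polyC_leq1.
by move=> z _; rewrite expr0 mulr1 hornerC.
Qed.

Lemma LP_add (C : numClosedFieldType) N (phi psi : C -> C) :
  LP N phi -> LP N psi -> LP N (fun z => phi z + psi z).
Proof.
move=> [q [sq hq]] [r [sr hr]]; exists (q + r); split.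
  by apply: leq_trans (size_polyD _ _) _; rewrite geq_max sq sr.
by move=> z nz; rewrite hornerD -hq // -hr // mulrDl.
Qed.

Lemma LP_mul (C : numClosedFieldType) N M (phi psi : C -> C) :
  LP N phi -> LP M psi -> LP (N + M) (fun z => phi z * psi z).
Proof.
move=> [q [sq hq]] [r [sr hr]]; exists (q * r); split.
  apply: leq_trans (size_polyMleq _ _) _; move: sq sr.
  set a := size q; set b := size r; lia.
move=> z nz; rewrite hornerM -hq // -hr // exprD; ring.
Qed.

Lemma LP_scale (C : numClosedFieldType) N (c : C) (phi : C -> C) :
  LP N phi -> LP N (fun z => c * phi z).
Proof.
move=> [q [sq hq]]; exists (c *: q); split.
  exact: leq_trans (size_scale_leq _ _) _.
by move=> z nz; rewrite hornerZ -hq // mulrA.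
Qed.

Lemma LP_sum (C : numClosedFieldType) N (I : Type) (r : seq I) (P : pred I)
   (F : I -> C -> C) :
  (forall i, P i -> LP N (F i)) -> LP N (fun z => \sum_(i <- r | P i) F i z).
Proof.
move=> h; elim: r => [|i r IH].
  apply: (LP_ext (@LP_const C N 0)) => z _; by rewrite big_nil.
case Pi: (P i).
  by apply: (LP_ext (LP_add (h i Pi) IH)) => z _; rewrite big_cons Pi.
by apply: (LP_ext IH) => z _; rewrite big_cons Pi.
Qed.

Lemma LP_prod (C : numClosedFieldType) (I : Type) (r : seq I)
   (F : I -> C -> C) (G : I -> nat) :
  (forall i, LP (G i) (F i)) -> LP (\sum_(i <- r) G i) (fun z => \prod_(i <- r) F i z).
Proof.
move=> h; elim: r => [|i r IH].
  by apply: (LP_ext (@LP_const C _ 1)) => z _; rewrite big_nil.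
by rewrite big_cons; apply: (LP_ext (LP_mul (h i) IH)) => z _; rewrite big_cons.
Qed.

Lemma LP_prod_zip (C : numClosedFieldType) (A B : Type)
   (F : A -> B -> C -> C) (G : B -> nat) :
  (forall a b, LP (G b) (F a b)) ->
  forall (s : seq A) (t : seq B),
    LP (\sum_(b <- t) G b) (fun z => \prod_(p <- zip s t) F p.1 p.2 z).
Proof.
move=> h; elim=> [|a s IH] [|b t] /=.
- by apply: (LP_ext (@LP_const C _ 1)) => z _; rewrite big_nil.
- by apply: (LP_ext (@LP_const C _ 1)) => z _; rewrite big_nil.
- by apply: (LP_ext (@LP_const C _ 1)) => z _; rewrite big_nil.
- rewrite big_cons; apply: (LP_ext (LP_mul (h a b) (IH t))) => z _.
  by rewrite big_cons.
Qed.

Definition Pl (C : numClosedFieldType) (ps : seq C) (x : C) : {poly C} :=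
  \prod_(y <- rem x ps) ('X - y%:P).
Definition Ll (C : numClosedFieldType) (ps : seq C) (x : C) : {poly C} :=
  ((Pl ps x).[x])^-1 *: Pl ps x.

Lemma Ll_eval (C : numClosedFieldType) (ps : seq C) x x' :
  uniq ps -> x \in ps -> x' \in ps -> (Ll ps x).[x'] = (x == x')%:R.
Proof.
move=> u xp x'p; rewrite /Ll hornerZ.
have [<-|nx] := eqVneq x x'.
  rewrite mulVf //; have := root_prod_XsubC (rem x ps) x.
  by rewrite mem_rem_uniqF // /root => ->.
have : root (Pl ps x) x' by rewrite /Pl root_prod_XsubC mem_rem_uniq // inE eq_sym nx.
by move/eqP => ->; rewrite mulr0.
Qed.

Lemma size_Ll (C : numClosedFieldType) (ps : seq C) x :
  x \in ps -> (size (Ll ps x) <= size ps)%N.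
Proof.
move=> xp; apply: leq_trans (size_scale_leq _ _) _.
rewrite /Pl size_prod_XsubC size_rem //; by case: ps xp.
Qed.

Lemma lagrange (C : numClosedFieldType) (ps : seq C) (q : {poly C}) :
  uniq ps -> (size q <= size ps)%N ->
  q = \sum_(x <- ps) q.[x] *: Ll ps x.
Proof.
move=> u sq; apply/eqP; rewrite -subr_eq0; apply/eqP.
apply: (roots_geq_poly_eq0 (rs := ps)) => //.
- apply/allP => x' x'p; rewrite /root hornerD hornerN horner_sum.
  rewrite (bigD1_seq x') //= hornerZ Ll_eval // eqxx mulr1 big1_seq.
    by rewrite addr0 subrr.
  move=> x /andP [nx xp]; rewrite hornerZ Ll_eval // (negbTE nx) mulr0 //.
- apply: leq_trans (size_polyD _ _) _; rewrite geq_max sq size_polyN.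
  apply: leq_trans (size_sum _ _ _) _; apply/bigmax_leqP_seq => x xp _.
  exact: leq_trans (size_scale_leq _ _) (size_Ll xp).
Qed.

Lemma interp (C : numClosedFieldType) N (ps : seq C) (z0 : C) :
  uniq ps -> size ps = (N + N).+1 -> z0 != 0 -> (forall x, x \in ps -> x != 0) ->
  exists lam : C -> C, (\sum_(x <- ps) lam x = 1) /\
    forall phi, LP N phi -> phi z0 = \sum_(x <- ps) lam x * phi x.
Proof.
move=> u sps nz0 nzp.
pose lam x := x ^+ N * (Ll ps x).[z0] / z0 ^+ N.
have key : forall phi, LP N phi ->
    phi z0 = \sum_(x <- ps) lam x * phi x.
  move=> phi [q [sq hq]].
  have e := lagrange u (leq_trans sq (eq_leq (esym sps))).
  have : phi z0 * z0 ^+ N = q.[z0] by rewrite hq.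
  rewrite {1}e horner_sum => h.
  apply: (mulIf (expf_neq0 N nz0)); rewrite h mulr_suml.
  apply: eq_big_seq => x xp; rewrite hornerZ -hq ?nzp // /lam.
  field; exact: expf_neq0.
exists lam; split; last by move=> phi h; apply: key.
have h1 := key _ (@LP_const C N 1).
transitivity (\sum_(x <- ps) lam x * 1); first by apply: eq_bigr => x _; rewrite mulr1.
by rewrite -h1.
Qed.

Definition aff2 (C : numClosedFieldType) (T : Type) (P : (T -> C) -> Prop) :=
  forall h1 h2 (t : C), P h1 -> P h2 -> P (fun u => (1 - t) * h1 u + t * h2 u).

Lemma aff_comb (C : numClosedFieldType) (T : Type) (P : (T -> C) -> Prop) :
  aff2 P -> forall (s : seq C) (V : C -> T -> C) (v0 : T -> C) (mu : C -> C),
  P v0 -> (forall x, x \in s -> P (V x)) ->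
  P (fun w => v0 w + \sum_(x <- s) mu x * (V x w - v0 w)).
Proof.
move=> hP; elim=> [|y s IH] V v0 mu P0 PV.
  by have -> : (fun w => v0 w + \sum_(x <- [::]) mu x * (V x w - v0 w)) = v0
    by apply: functional_extensionality => w; rewrite big_nil addr0.
have X := IH V v0 (fun x => 2 * mu x) P0 (fun x xs => PV x (@mem_behead _ (y :: s) x xs)).
have Y := hP v0 (V y) (2 * mu y) P0 (PV y (mem_head _ _)).
have Z := hP _ _ (2^-1) X Y.
have h2 : (2 : C) != 0 by rewrite pnatr_eq0.
suff <- : (fun u => (1 - 2^-1) * (v0 u + \sum_(x <- s) 2 * mu x * (V x u - v0 u)) +
              2^-1 * ((1 - 2 * mu y) * v0 u + 2 * mu y * V y u)) =
          (fun w => v0 w + \sum_(x <- y :: s) mu x * (V x w - v0 w)) by [].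
apply: functional_extensionality => w; rewrite big_cons.
have -> : \sum_(x <- s) 2 * mu x * (V x w - v0 w) = 2 * \sum_(x <- s) mu x * (V x w - v0 w).
  by rewrite mulr_sumr; apply: eq_bigr => x _; rewrite mulrA.
by field.
Qed.

Lemma aff_interp (C : numClosedFieldType) (T : Type) (P : (T -> C) -> Prop) N
    (ps : seq C) (z0 : C) (V : C -> T -> C) :
  aff2 P -> uniq ps -> size ps = (N + N).+1 -> z0 != 0 ->
  (forall x, x \in ps -> x != 0) -> (forall x, x \in ps -> P (V x)) ->
  (forall w, LP N (fun z => V z w)) -> P (V z0).
Proof.
move=> hP u sps nz0 nzp PV hLP.
have [lam [s1 hl]] := interp u sps nz0 nzp.
case: ps u sps nzp PV s1 hl => [//|x0 s] u sps nzp PV s1 hl.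
suff -> : V z0 = (fun w => V x0 w + \sum_(x <- s) lam x * (V x w - V x0 w)).
  by apply: aff_comb => // [|x xs]; apply: PV; rewrite ?mem_head ?inE ?xs ?orbT.
apply: functional_extensionality => w; rewrite (hl _ (hLP w)) big_cons.
have : lam x0 = 1 - \sum_(x <- s) lam x by rewrite -s1 big_cons addrK.
move=> ->; rewrite mulrBl mul1r -addrA; congr (_ + _).
rewrite mulr_suml -sumrN -big_split /=; apply: eq_bigr => x _; ring.
Qed.


Definition c2 (C : numClosedFieldType) (z : C) := (z + z^-1) / 2.
Definition s2 (C : numClosedFieldType) (z : C) := (z - z^-1) / 2.
Definition B2 (C : numClosedFieldType) (z : C) : 'M[C]_2 :=
  \matrix_(i, j) if i == j then c2 z else s2 z.
Definition Bm (C : numClosedFieldType) (d' : nat) (z : C) : 'M[C]_(2 + d') :=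
  block_mx (B2 z) 0 0 1%:M.
Definition eta2 (C : numClosedFieldType) : 'M[C]_2 :=
  \matrix_(i, j) if i == j then (if i == 0 then 1 else -1) else 0.

Lemma sum2 (C : numClosedFieldType) (F : 'I_2 -> C) : \sum_i F i = F 0 + F 1.
Proof. rewrite !big_ord_recl big_ord0 addr0; congr (_ + F _); exact: val_inj. Qed.

Lemma det2 (C : numClosedFieldType) (A : 'M[C]_2) :
  \det A = A 0 0 * A 1 1 - A 0 1 * A 1 0.
Proof.
rewrite (expand_det_row _ 0) sum2 /cofactor !det_mx11 !mxE /=.
have -> : lift 0 0 = 1 :> 'I_2 by apply: val_inj.
have -> : lift 1 0 = 0 :> 'I_2 by apply: val_inj.
rewrite expr0 expr1; ring.
Qed.

Lemma two_neq0 (C : numClosedFieldType) : (2 : C) != 0.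
Proof. by rewrite pnatr_eq0. Qed.

Ltac mx2 := apply/matrixP => - [[|[|//]] ?] [[|[|//]] ?]; rewrite !(mxE, sum2) /=.

Lemma B2M (C : numClosedFieldType) (z w : C) : z != 0 -> w != 0 ->
  B2 z *m B2 w = B2 (z * w).
Proof.
move=> nz nw; have h2 := two_neq0 C.
by mx2; rewrite /c2 /s2 ?invfM; field; rewrite nz nw.
Qed.

Lemma B21 (C : numClosedFieldType) : B2 (1 : C) = 1%:M.
Proof. have h2 := two_neq0 C. by mx2; rewrite /c2 /s2 invr1; field. Qed.

Lemma B2T (C : numClosedFieldType) (z : C) : (B2 z)^T = B2 z.
Proof. by mx2. Qed.

Lemma B2eta (C : numClosedFieldType) (z : C) : z != 0 ->
  (B2 z)^T *m eta2 C *m B2 z = eta2 C.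
Proof.
move=> nz; have h2 := two_neq0 C.
by mx2; rewrite ?mulr0 ?mul0r ?addr0 ?add0r ?mulr1 ?mul1r /c2 /s2; field.
Qed.

Lemma detB2 (C : numClosedFieldType) (z : C) : z != 0 -> \det (B2 z) = 1.
Proof.
move=> nz; have h2 := two_neq0 C.
by rewrite det2 !mxE /= /c2 /s2; field.
Qed.

Lemma eta2_sq (C : numClosedFieldType) : eta2 C *m eta2 C = 1%:M.
Proof. by mx2; rewrite ?mulr0 ?mul0r ?addr0 ?add0r ?mulrNN ?mulr1. Qed.

Lemma eta2T (C : numClosedFieldType) : (eta2 C)^T = eta2 C.
Proof. by mx2. Qed.

Lemma splitE m n (i : 'I_(m + n)) :
  (exists k, i = lshift n k) \/ (exists k, i = rshift m k).
Proof.
case: (splitP i) => k hk; [left|right]; exists k; exact: val_inj.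
Qed.

Lemma eta_blk (C : numClosedFieldType) d' :
  Defs.eta C (2 + d') = block_mx (eta2 C) 0 0 (- (1%:M : 'M[C]_d')).
Proof.
apply/matrixP => i j.
case: (@splitE 2 d' i) => -[k ->]; case: (@splitE 2 d' j) => -[l ->].
  rewrite block_mxEul !mxE.
  by case: k => [[|[|//]] ?]; case: l => [[|[|//]] ?].
- have e : (lshift d' k == rshift 2 l :> 'I_(2 + d')) = false by exact: eq_lrshift.
  by rewrite block_mxEur !mxE e.
- have e : (rshift 2 k == lshift d' l :> 'I_(2 + d')) = false.
    apply/negbTE/eqP => /(congr1 val) /= h; have := ltn_ord l; rewrite -h; lia.
  by rewrite block_mxEdl !mxE e.
- have e : (rshift 2 k == rshift 2 l :> 'I_(2 + d')) = (k == l).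
    by rewrite -val_eqE /= eqn_add2l val_eqE.
  rewrite block_mxEdr !mxE e /=.
  by case: (k == l); rewrite ?mulr1n ?mulr0n ?oppr0.
Qed.

Lemma BmM (C : numClosedFieldType) d' (z w : C) : z != 0 -> w != 0 ->
  Bm d' z *m Bm d' w = Bm d' (z * w).
Proof.
move=> nz nw; rewrite /Bm mulmx_block !mulmx0 !mul0mx !addr0 !add0r mul1mx.
by rewrite B2M.
Qed.

Lemma Bm1 (C : numClosedFieldType) d' : Bm d' (1 : C) = 1%:M.
Proof. by rewrite /Bm B21 -scalar_mx_block. Qed.

Lemma BmT (C : numClosedFieldType) d' (z : C) : (Bm d' z)^T = Bm d' z.
Proof. by rewrite /Bm tr_block_mx B2T !trmx0 trmx1. Qed.

Lemma eta_sq (C : numClosedFieldType) d' :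
  Defs.eta C (2 + d') *m Defs.eta C (2 + d') = 1%:M.
Proof.
rewrite eta_blk mulmx_block !mulmx0 !mul0mx !addr0 !add0r eta2_sq.
by rewrite mulNmx mulmxN opprK mulmx1 -scalar_mx_block.
Qed.

Lemma etaT (C : numClosedFieldType) d' : (Defs.eta C (2 + d'))^T = Defs.eta C (2 + d').
Proof. by rewrite eta_blk tr_block_mx eta2T !trmx0 raddfN /= trmx1. Qed.

Lemma Bm_LC (C : numClosedFieldType) d' (z : C) : z != 0 -> LC (Bm d' z).
Proof.
move=> nz; split.
  rewrite BmT eta_blk /Bm !mulmx_block !mulmx0 !mul0mx !addr0 !add0r.
  by rewrite -{1}(B2T z) B2eta // mulmxN mulNmx !mulmx1 mul0mx.
transitivity (\det (B2 z) * \det (1%:M : 'M[C]_d')); first exact: det_ublock.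
by rewrite detB2 // det1 mulr1. Qed.

Lemma LC_mul (C : numClosedFieldType) d (A B : 'M[C]_d) : LC A -> LC B -> LC (A *m B).
Proof.
move=> [hA dA] [hB dB]; split; last by rewrite det_mulmx dA dB mulr1.
by rewrite trmx_mul !mulmxA -(mulmxA B^T) -(mulmxA B^T) hA hB.
Qed.

Lemma real_mul (C : numClosedFieldType) d (A B : 'M[C]_d) :
  real_mx A -> real_mx B -> real_mx (A *m B).
Proof.
move=> hA hB i j; rewrite mxE; apply: rpred_sum => k _; exact: rpredM.
Qed.

Lemma entry00E (C : numClosedFieldType) d' (A : 'M[C]_(2 + d')) :
  entry00 A = A (lshift d' 0) (lshift d' 0).
Proof.
rewrite /entry00 big_split_ord /= [X in _ + X]big_pred0 ?addr0; last first.
  by move=> i /=.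
rewrite (big_pred1 (0 : 'I_2)) // => -[[|[|//]] ?] //.
Qed.

Lemma Bm00 (C : numClosedFieldType) d' (z : C) (A : 'M[C]_(2 + d')) :
  (Bm d' z *m A) (lshift d' 0) (lshift d' 0) =
  c2 z * A (lshift d' 0) (lshift d' 0) + s2 z * A (lshift d' 1) (lshift d' 0).
Proof.
rewrite mxE big_split_ord /= [X in _ + X]big1 ?addr0; last first.
  by move=> i _; rewrite /Bm block_mxEur mxE mul0r.
by rewrite sum2 /Bm !block_mxEul !mxE.
Qed.

Lemma pos_of (C : numClosedFieldType) (x y : C) :
  x \is Num.real -> y \is Num.real -> 0 < x * y -> 0 < x + y -> 0 < x.
Proof.
move=> rx ry hxy hs; case/orP: (real_leVge rx (real0 C)) => hx; last first.
  rewrite lt_def hx andbT; apply/eqP => x0; move: hxy; rewrite x0 mul0r ltxx //.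
case/orP: (real_leVge ry (real0 C)) => hy.
  by have := lt_le_trans hs (lerD hx hy); rewrite addr0 ltxx.
by have := lt_le_trans hxy (mulr_le0_ge0 hx hy); rewrite ltxx.
Qed.

Lemma Bm_pos (C : numClosedFieldType) (z a b : C) :
  0 < z -> a \is Num.real -> b \is Num.real -> 0 < a -> 1 <= a * a - b * b ->
  0 < c2 z * a + s2 z * b.
Proof.
move=> z0 ra rb a0 hab.
have p1 : 0 < (a + b) * (a - b).
  have -> : (a + b) * (a - b) = a * a - b * b by ring.
  exact: lt_le_trans ltr01 hab.
have p2 : 0 < (a + b) + (a - b).
  by rewrite addrACA subrr addr0 addr_gt0.
have q1 := pos_of (rpredD ra rb) (rpredB ra rb) p1 p2.
have q2 : 0 < a - b.
  by apply: (pos_of (rpredB ra rb) (rpredD ra rb)); rewrite ?(mulrC (a - b)) ?(addrC (a - b)).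
have -> : c2 z * a + s2 z * b = (z * (a + b) + z^-1 * (a - b)) / 2.
  by rewrite /c2 /s2; ring.
apply: divr_gt0; last by rewrite ltr0n.
by apply: addr_gt0; apply: mulr_gt0; rewrite ?invr_gt0.
Qed.

Lemma lorentz_norm (C : numClosedFieldType) d' (A : 'M[C]_(2 + d')) :
  LC A -> real_mx A ->
  1 <= A (lshift d' 0) (lshift d' 0) * A (lshift d' 0) (lshift d' 0)
       - A (lshift d' 1) (lshift d' 0) * A (lshift d' 1) (lshift d' 0).
Proof.
move=> [hA _] rA.
have e := congr1 (fun M : 'M[C]_(2 + d') => M (lshift d' 0) (lshift d' 0)) hA; move: e => /=.
have sg : forall k, (A^T *m Defs.eta C (2 + d')) (lshift d' 0) k =
    A k (lshift d' 0) * (if val k == 0%N then 1 else -1).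
  move=> k; rewrite mxE (bigD1 k) //= big1 ?addr0; last first.
    by move=> j nj; rewrite !mxE (negbTE nj) mulr0.
  by rewrite !mxE eqxx.
rewrite mxE; under eq_bigr do rewrite sg.
rewrite big_split_ord /= sum2 /= mxE eqxx /=.
move=> e; rewrite -e mulr1 mulrN1 mulNr.
rewrite -[X in _ <= X]addr0 lerD //.
rewrite -oppr_ge0 -sumrN; apply: sumr_ge0 => i _.
by rewrite mulrN1 mulNr opprK -expr2 -realEsqr; exact: rA.
Qed.

Lemma LC_inv (C : numClosedFieldType) d' (A : 'M[C]_(2 + d')) :
  LC A -> invmx A = Defs.eta C (2 + d') *m A^T *m Defs.eta C (2 + d') /\
          LC (Defs.eta C (2 + d') *m A^T *m Defs.eta C (2 + d')).
Proof.
move=> [hA dA]; set E := Defs.eta C (2 + d').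
have EE : E *m E = 1%:M by exact: eta_sq.
have ET : E^T = E by exact: etaT.
have XA : E *m A^T *m E *m A = 1%:M by rewrite -!mulmxA (mulmxA A^T) hA.
have AX : A *m (E *m A^T *m E) = 1%:M by exact: mulmx1C.
have uA : A \in unitmx by case: (mulmx1_unit AX).
have h1 : A *m E *m A^T = E.
  by rewrite -[RHS]mul1mx -AX -!mulmxA EE mulmx1.
split.
  by rewrite -[LHS]mulmx1 -AX (mulmxA (invmx A)) mulVmx // mul1mx.
split.
  rewrite !trmx_mul ET trmxK -/E.
  have EEl : forall X : 'M[C]_(2 + d'), E *m (E *m X) = X.
    by move=> X; rewrite mulmxA EE mul1mx.
  have h1' : forall X : 'M[C]_(2 + d'), A *m (E *m (A^T *m X)) = E *m X.
    by move=> X; rewrite !mulmxA h1.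
  by rewrite -!mulmxA EEl h1' EEl.
rewrite !det_mulmx det_tr dA mulr1 -det_mulmx EE det1 //.
Qed.

Lemma real_c2 (C : numClosedFieldType) (z : C) : z \is Num.real -> c2 z \is Num.real.
Proof. by move=> rz; rewrite /c2 rpredM // ?rpredD // rpredV // ?realn. Qed.

Lemma real_s2 (C : numClosedFieldType) (z : C) : z \is Num.real -> s2 z \is Num.real.
Proof. by move=> rz; rewrite /s2 rpredM // ?rpredB // rpredV // ?realn. Qed.

Lemma realBm (C : numClosedFieldType) d' (z : C) : z \is Num.real -> real_mx (Bm d' z).
Proof.
move=> rz i j.
case: (@splitE 2 d' i) => -[k ->]; case: (@splitE 2 d' j) => -[l ->]; rewrite /Bm.
- by rewrite block_mxEul mxE; case: ifP => _; rewrite ?real_c2 ?real_s2.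
- by rewrite block_mxEur mxE real0.
- by rewrite block_mxEdl mxE real0.
- by rewrite block_mxEdr mxE rpred_nat.
Qed.

Lemma Lup_Bm_mul (C : numClosedFieldType) d' (z : C) (h : 'M[C]_(2 + d')) :
  0 < z -> Lup h -> Lup (Bm d' z *m h).
Proof.
move=> z0 [[hL hr] h0]; have rz : z \is Num.real by rewrite realE ltW.
split; first split.
- exact: LC_mul (Bm_LC _ (lt0r_neq0 z0)) hL.
- by apply: real_mul => //; apply: realBm.
rewrite entry00E Bm00; rewrite entry00E in h0.
apply: Bm_pos => //; try exact: hr; exact: lorentz_norm hL hr.
Qed.

Lemma Ldown_Lup (C : numClosedFieldType) d' (g : 'M[C]_(2 + d')) :
  Ldown g -> Lup (Bm d' (-1) *m g).
Proof.
move=> [[gL gr] g0]; have r1 : (-1 : C) \is Num.real by rewrite rpredN real1.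
split; first split.
- by apply: LC_mul gL; apply: Bm_LC; rewrite oppr_eq0 oner_eq0.
- by apply: real_mul => //; apply: realBm.
rewrite entry00E Bm00; rewrite entry00E in g0.
have -> : c2 (-1 : C) = -1 by rewrite /c2 invrN invr1; field.
have -> : s2 (-1 : C) = 0 by rewrite /s2 invrN invr1 subrr mul0r.
by rewrite mul0r addr0 mulN1r oppr_gt0.
Qed.

Lemma BmBm (C : numClosedFieldType) d' (g : 'M[C]_(2 + d')) :
  Bm d' (-1) *m (Bm d' (-1) *m g) = g.
Proof.
have n1 : (-1 : C) != 0 by rewrite oppr_eq0 oner_eq0.
by rewrite mulmxA BmM // mulN1r opprK Bm1 mul1mx.
Qed.

Lemma Ldown_Bm (C : numClosedFieldType) d' (z : C) : z < 0 -> Ldown (Bm d' z).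
Proof.
move=> z0; have rz : z \is Num.real by rewrite realE (ltW z0) orbT.
split; first split.
- by apply: Bm_LC; rewrite ltr0_neq0.
- exact: realBm.
rewrite entry00E /Bm block_mxEul mxE eqxx /c2.
by rewrite pmulr_llt0 ?invr_gt0 ?ltr0n // -oppr_gt0 opprD addr_gt0 // oppr_gt0 ?invr_lt0.
Qed.

Lemma LP_c2 (C : numClosedFieldType) : LP 1 (@c2 C).
Proof.
exists (2^-1 *: ('X^2 + 1)); split.
  apply: leq_trans (size_scale_leq _ _) _.
  by apply: leq_trans (size_polyD _ _) _; rewrite size_polyXn size_poly1.
move=> z nz; rewrite hornerZ hornerD hornerXn hornerC /c2 expr1.
by field.
Qed.

Lemma LP_s2 (C : numClosedFieldType) : LP 1 (@s2 C).
Proof.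
exists (2^-1 *: ('X^2 - 1)); split.
  apply: leq_trans (size_scale_leq _ _) _.
  by apply: leq_trans (size_polyD _ _) _; rewrite size_polyN size_polyXn size_poly1.
move=> z nz; rewrite hornerZ hornerD hornerN hornerXn hornerC /s2 expr1.
by field.
Qed.

Lemma LP1_Bm (C : numClosedFieldType) d' (i j : 'I_(2 + d')) :
  LP 1 (fun z : C => Bm d' z i j).
Proof.
case: (@splitE 2 d' i) => -[k ->]; case: (@splitE 2 d' j) => -[l ->]; rewrite /Bm.
- apply: (LP_ext (_ : LP 1 (fun z => if k == l then c2 z else s2 z))).
    by case: (k == l); [exact: LP_c2 | exact: LP_s2].
  by move=> z _; rewrite block_mxEul mxE.
- by apply: (LP_ext (@LP_const C 1 0)) => z _; rewrite block_mxEur mxE.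
- by apply: (LP_ext (@LP_const C 1 0)) => z _; rewrite block_mxEdl mxE.
- by apply: (LP_ext (@LP_const C 1 ((k == l)%:R))) => z _; rewrite block_mxEdr mxE.
Qed.

Lemma LP1_mulr (C : numClosedFieldType) d (A : C -> 'M[C]_d) (K : 'M[C]_d) :
  (forall i j, LP 1 (fun z => A z i j)) -> forall i j, LP 1 (fun z => (A z *m K) i j).
Proof.
move=> hA i j; apply: (LP_ext (_ : LP 1 (fun z => \sum_k K k j * A z i k))).
  by apply: LP_sum => k _; apply: LP_scale.
by move=> z _; rewrite mxE; apply: eq_bigr => k _; rewrite mulrC.
Qed.

Lemma LP1_mull (C : numClosedFieldType) d (A : C -> 'M[C]_d) (K : 'M[C]_d) :
  (forall i j, LP 1 (fun z => A z i j)) -> forall i j, LP 1 (fun z => (K *m A z) i j).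
Proof.
move=> hA i j; apply: (LP_ext (_ : LP 1 (fun z => \sum_k K i k * A z k j))).
  by apply: LP_sum => k _; apply: LP_scale.
by move=> z _; rewrite mxE.
Qed.

Lemma LP1_tr (C : numClosedFieldType) d (A : C -> 'M[C]_d) :
  (forall i j, LP 1 (fun z => A z i j)) -> forall i j, LP 1 (fun z => (A z)^T i j).
Proof. by move=> hA i j; apply: (LP_ext (hA j i)) => z _; rewrite mxE. Qed.

Lemma LP_polyfun (C : numClosedFieldType) d (p : 'M[C]_d -> C) : polyfun p ->
  exists N, forall A : C -> 'M[C]_d, (forall i j, LP 1 (fun z => A z i j)) ->
    LP N (fun z => p (A z)).
Proof.
elim=> [c|i j|f g _ IH1 _ IH2|f g _ IH1 _ IH2].
- by exists 0%N => A _; exact: LP_const.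
- by exists 1%N => A hA; exact: hA.
- case: IH1 => N1 h1; case: IH2 => N2 h2; exists (maxn N1 N2) => A hA; apply: LP_add.
    exact: LP_mono (leq_maxl _ _) (h1 A hA).
  exact: LP_mono (leq_maxr _ _) (h2 A hA).
- case: IH1 => N1 h1; case: IH2 => N2 h2.
  by exists (N1 + N2)%N => A hA; apply: LP_mul; [exact: h1 | exact: h2].
Qed.

Lemma unif_bound (I : finType) (P : I -> nat -> Prop) :
  (forall i N M, (N <= M)%N -> P i N -> P i M) ->
  (forall i, exists N, P i N) -> exists N, forall i, P i N.
Proof.
move=> mono h.
suff [N hN] : exists N, forall i, i \in enum I -> P i N.
  by exists N => i; apply: hN; rewrite mem_enum.
elim: (enum I) => [|x s [N hN]]; first by exists 0%N.
have [M hM] := h x; exists (maxn N M) => i; rewrite inE => /orP [/eqP ->|iss].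
  exact: mono (leq_maxr _ _) hM.
exact: mono (leq_maxl _ _) (hN i iss).
Qed.

Lemma LP_entry_poly (C : numClosedFieldType) d m (F : 'M[C]_d -> 'M[C]_m)
    (A B : C -> 'M[C]_d) :
  (forall i j, exists p, polyfun p /\ forall g, LC g -> p g = F g i j) ->
  (forall i j, LP 1 (fun z => B z i j)) ->
  (forall z, z != 0 -> A z = B z /\ LC (B z)) ->
  exists N, forall i j, LP N (fun z => F (A z) i j).
Proof.
move=> hF hB hAB.
have := @unif_bound ('I_m * 'I_m)%type
  (fun ij N => LP N (fun z => F (A z) ij.1 ij.2)).
case.
- by move=> ij N M le; apply: LP_mono.
- move=> [i j] /=; have [p [pp hp]] := hF i j.
  have [N hN] := LP_polyfun pp; exists N.
  apply: (LP_ext (hN _ hB)) => z nz.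
  by have [-> LB] := hAB z nz; rewrite hp.
by move=> N hN; exists N => i j; exact: (hN (i, j)).
Qed.

Lemma sigma_LP (C : numClosedFieldType) d' n (rho : 'M[C]_(2 + d') -> 'M[C]_n)
    (omega : 'M[C]_(2 + d') -> 'M[C]_(2 + d'))
    (hrho : holo_ext_rep rho) (homega : holo_ext_rep omega)
    (h : 'M[C]_(2 + d')) (hL : LC h) (f : kelt C (2 + d') n) (fs : finsupp f) :
  exists N, forall w, LP N (fun z => sigma rho omega (Bm d' z *m h) f w).
Proof.
set E := Defs.eta C (2 + d').
pose Mz z := Bm d' z *m h.
pose Mz' z := E *m (Mz z)^T *m E.
have LM : forall i j, LP 1 (fun z => Mz z i j).
  by apply: LP1_mulr => i j; exact: LP1_Bm.
have LM' : forall i j, LP 1 (fun z => Mz' z i j).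
  by apply: LP1_mulr; apply: LP1_mull; apply: LP1_tr.
have LCM : forall z, z != 0 -> LC (Mz z).
  by move=> z nz; apply: LC_mul hL; exact: Bm_LC.
case: hrho => _ _ prho _; case: homega => _ _ pomega _.
have [Nr hr] : exists N, forall i j, LP N (fun z => rho (invmx (Mz z)) i j).
  apply: LP_entry_poly prho LM' _ => z nz.
  by have [-> ?] := LC_inv (LCM z nz).
have [No ho] : exists N, forall i j, LP N (fun z => omega (Mz z) i j).
  by apply: LP_entry_poly pomega LM _ => z nz; split => //; exact: LCM.
pose G (x : letter (2 + d') n) := (Nr + \sum_(b <- x.2) No)%N.
pose Gu (u : seq (letter (2 + d') n)) := \sum_(x <- u) G x.
case: fs => s hs.
exists (\max_(u <- s) Gu u) => w.
rewrite /sigma /alg_map /=.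
apply: LP_sum => u _.
have [fu0|nfu] := eqVneq (f u) 0.
  by apply: (LP_ext (@LP_const C _ 0)) => z _; rewrite fu0 mul0r.
have us : u \in s by apply: contraNT nfu => /hs ->.
apply: (LP_mono (@leq_bigmax_seq _ s xpredT Gu u us isT)).
pose F (y x : letter (2 + d') n) (z : C) :=
  rho (invmx (Mz z)) x.1 y.1 * \prod_(q <- zip y.2 x.2) omega (Mz z) q.1 q.2.
have X : LP (Gu u) (fun z => \prod_(p <- zip w u) F p.1 p.2 z).
  apply: (@LP_prod_zip C _ _ F G) => y x.
  apply: LP_mul; first exact: hr.
  exact: (@LP_prod_zip C _ _ (fun a b z => omega (Mz z) a b) (fun _ => No)).
exact: (LP_scale (f u) X).
Qed.

Lemma seqs_size d k (s : seq 'I_d) : s \in seqs_of_len d k -> size s = k.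
Proof.
elim: k s => [|k IH] s /=; first by rewrite inE => /eqP ->.
by case/allpairsP => -[i t] /= [_ ts ->] /=; rewrite (IH t).
Qed.

Lemma seqs_mem d (s : seq 'I_d) : s \in seqs_of_len d (size s).
Proof.
elim: s => [|i s IH] /=; first by rewrite inE.
by apply: (allpairs_f (fun i s => i :: s)); rewrite ?mem_enum.
Qed.

Lemma seqs_uniq d k : uniq (seqs_of_len d k).
Proof.
elim: k => [|k IH] //=; apply: allpairs_uniq => //; first exact: enum_uniq.
by move=> [a b] [c e] _ _ /= [-> ->].
Qed.

Lemma letters_size d n k (y : letter d n) : y \in letters_of_len d n k -> size y.2 = k.
Proof. by case/allpairsP => -[b s] /= [_ hs ->] /=; exact: seqs_size. Qed.

Lemma letters_mem d n (y : letter d n) : y \in letters_of_len d n (size y.2).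
Proof.
case: y => b s /=; apply: (allpairs_f pair); rewrite ?mem_enum //; exact: seqs_mem.
Qed.

Lemma letters_uniq d n k : uniq (letters_of_len d n k).
Proof.
apply: allpairs_uniq; [exact: enum_uniq | exact: seqs_uniq |].
by move=> [a b] [c e] _ _ /= [-> ->].
Qed.

Lemma ss_mem d n (w : seq (letter d n)) : w \in same_shape w.
Proof.
elim: w => [|x w IH] /=; first by rewrite inE.
by apply: (allpairs_f (fun y v => y :: v)) => //; exact: letters_mem.
Qed.

Lemma ss_uniq d n (w : seq (letter d n)) : uniq (same_shape w).
Proof.
elim: w => [|x w IH] //=; apply: allpairs_uniq => //; first exact: letters_uniq.
by move=> [a b] [c e] _ _ /= [-> ->].
Qed.

Lemma prod_eqR (C : numClosedFieldType) (T : eqType) (s t : seq T) :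
  size s = size t -> \prod_(p <- zip s t) ((p.1 == p.2)%:R : C) = (s == t)%:R.
Proof.
elim: s t => [|a s IH] [|b t] //=; first by rewrite big_nil.
move=> [e]; rewrite big_cons IH // eqseq_cons.
by case: (a == b); case: (s == t); rewrite /= ?mul1r ?mul0r.
Qed.

Lemma sigma_id (C : numClosedFieldType) d n (rho : 'M[C]_d -> 'M[C]_n)
    (omega : 'M[C]_d -> 'M[C]_d)
    (hrho : holo_ext_rep rho) (homega : holo_ext_rep omega) (f : kelt C d n) :
  sigma rho omega 1%:M f = f.
Proof.
case: hrho => r1 _ _ _; case: homega => o1 _ _ _.
apply: functional_extensionality => w.
rewrite /sigma /alg_map /= invmx1 r1 o1.
have key : forall u, u \in same_shape w ->
  \prod_(p <- zip w u) ((1%:M : 'M[C]_n) p.2.1 p.1.1 *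
       \prod_(q <- zip p.1.2 p.2.2) (1%:M : 'M[C]_d) q.1 q.2) = (w == u)%:R.
  elim: w {f} => [|x w IH] u /=.
    by rewrite inE => /eqP ->; rewrite big_nil.
  case/allpairsP => -[y v] /= [yl vs ->] /=; rewrite big_cons IH //= eqseq_cons.
  have sy := letters_size yl.
  under eq_bigr do rewrite mxE.
  rewrite prod_eqR // mxE.
  case: x y {yl} sy => [a s] [b t] /= sy; rewrite xpair_eqE.
  by rewrite eq_sym; case: (a == b); case: (s == t); case: (w == v);
     rewrite /= ?mul1r ?mul0r ?mulr0 ?mulr1.
rewrite (bigD1_seq w) ?ss_mem ?ss_uniq //= key ?ss_mem // eqxx mulr1 big1_seq ?addr0 //.
by move=> u /andP [nu us]; rewrite key // eq_sym (negbTE nu) mulr0.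
Qed.

Lemma cfft_aff (C : numClosedFieldType) d n (Dc : kelt C d n -> Prop) :
  affine_subspace_Fc Dc -> aff2 (cfft Dc).
Proof.
move=> [_ hA] h1 h2 t [[s1 hs1] D1] [[s2 hs2] D2]; split.
  exists (s1 ++ s2) => w; rewrite mem_cat negb_or => /andP [w1 w2].
  by rewrite hs1 // hs2 // !mulr0 addr0.
have -> : cmap (fun u => (1 - t) * h1 u + t * h2 u) =
          (fun u => (1 - t) * cmap h1 u + t * cmap h2 u).
  apply: functional_extensionality => u; rewrite /cmap big_split /=.
  by rewrite !mulr_sumr.
exact: hA.
Qed.

Lemma Cdollar_comb (C : numClosedFieldType) d n anti dollar (h1 h2 : kelt C d n) (t : C) :
  Cdollar anti dollar (fun u => (1 - t) * h1 u + t * h2 u) =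
  (fun w => (1 - (if anti then t^* else t)) * Cdollar anti dollar h1 w +
            (if anti then t^* else t) * Cdollar anti dollar h2 w).
Proof.
apply: functional_extensionality => w; rewrite /Cdollar /alg_map !mulr_sumr -big_split /=.
apply: eq_bigr => u _; case: anti.
  by rewrite rmorphD !rmorphM rmorphB rmorph1 mulrDl !mulrA.
by rewrite mulrDl !mulrA.
Qed.

Lemma Cdollar_aff (C : numClosedFieldType) d n (Dc : kelt C d n -> Prop) anti dollar :
  affine_subspace_Fc Dc -> aff2 (fun f => cfft Dc (Cdollar anti dollar f)).
Proof.
move=> hD h1 h2 t H1 H2; rewrite Cdollar_comb; exact: cfft_aff.
Qed.

Lemma SantiK (C : numClosedFieldType) d n (f : kelt C d n) : Santi (Santi f) = f.
Proof. by apply: functional_extensionality => w; rewrite /Santi revK. Qed.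

Lemma Santi_pres (C : numClosedFieldType) d n (Dc : kelt C d n -> Prop) :
  preserves (@Santi C d n) (cfft Dc).
Proof.
move=> f [[s hs] Df]; split.
  exists (map rev s) => w ws; rewrite /Santi hs //; apply: contra ws => rws.
  by rewrite -(revK w) map_f.
suff -> : cmap (Santi f) = cmap f by [].
apply: functional_extensionality => u; rewrite /cmap /Santi.
rewrite -(big_map rev xpredT f).
apply: perm_big; apply: uniq_perm.
- by rewrite map_inj_uniq ?permutations_uniq //; exact: (can_inj revK).
- exact: permutations_uniq.
move=> v; rewrite mem_permutations -{1}(revK v) (mem_map (can_inj revK)) mem_permutations.
by rewrite perm_rev.
Qed.

Lemma family (C : numClosedFieldType) d' n (rho : 'M[C]_(2 + d') -> 'M[C]_n)
    (omega : 'M[C]_(2 + d') -> 'M[C]_(2 + d'))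
    (hrho : holo_ext_rep rho) (homega : holo_ext_rep omega)
    (P : kelt C (2 + d') n -> Prop) (hP : aff2 P)
    (h : 'M[C]_(2 + d')) (hL : LC h) (f : kelt C (2 + d') n) (fs : finsupp f)
    (eps z0 : C) (he : eps != 0) (nz0 : z0 != 0) :
  (forall k : nat, P (sigma rho omega (Bm d' (eps * k.+1%:R) *m h) f)) ->
  P (sigma rho omega (Bm d' z0 *m h) f).
Proof.
move=> H; have [N hN] := sigma_LP hrho homega hL fs.
pose V z := sigma rho omega (Bm d' z *m h) f.
pose ps := [seq eps * k.+1%:R | k <- iota 0 (N + N).+1].
apply: (@aff_interp C _ P N ps z0 V hP) => //.
- rewrite map_inj_uniq ?iota_uniq // => a b /(mulfI he) /eqP.
  by rewrite eqr_nat => /eqP [].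
- by rewrite size_map size_iota.
- by move=> x /mapP [k _ ->]; rewrite mulf_neq0 // pnatr_eq0.
- by move=> x /mapP [k _ ->]; exact: H.
Qed.

Lemma LC1 (C : numClosedFieldType) d : LC (1%:M : 'M[C]_d).
Proof. by split; rewrite ?trmx1 ?mul1mx ?mulmx1 ?det1. Qed.

Unset Implicit Arguments.
Set Strict Implicit.

Theorem theorem3 (C : numClosedFieldType) (d n : nat) (hd : (3 <= d)%N)
    (rho : 'M[C]_d -> 'M[C]_n) (omega : 'M[C]_d -> 'M[C]_d)
    (hrho : holo_ext_rep rho) (homega : holo_ext_rep omega)
    (anti : bool) (dollar : 'rV[C]_n -> 'rV[C]_n)
    (hdol_add : forall x y, dollar (x + y) = dollar x + dollar y)
    (hdol_sl : forall (z : C) x, dollar (z *: x) = (if anti then z^* else z) *: dollar x)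
    (hdol_inv : forall x, dollar (dollar x) = x)
    (Dc : kelt C d n -> Prop) (hDc : affine_subspace_Fc Dc)
    (hinv : forall g, Lup g -> preserves (sigma rho omega g) (cfft Dc)) :
  (forall g, Ldown g ->
     preserves (fun f => Cdollar anti dollar (sigma rho omega g f)) (cfft Dc))
  <-> preserves (dagger anti dollar) (cfft Dc).
Proof.
have [d' e] : exists d', d = (2 + d')%N by exists (d - 2)%N; lia.
subst d.
have Saff := cfft_aff hDc.
have SP := @Santi_pres _ _ _ Dc.
split.
- move=> Hdown f Df; rewrite /dagger; apply: SP.
  have fs : finsupp f by case: Df.
  have := @family C d' n rho omega hrho homega
     (fun f => cfft Dc (Cdollar anti dollar f)) (@Cdollar_aff _ _ _ Dc anti dollar hDc)
     1%:M (LC1 _ _) f fs (-1) 1.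
  rewrite Bm1 mulmx1 sigma_id //; apply => //.
  + by rewrite oppr_eq0 oner_eq0.
  + by rewrite oner_eq0.
  move=> k; rewrite mulmx1; apply: (Hdown _ _ f Df); apply: Ldown_Bm.
  by rewrite mulN1r oppr_lt0 ltr0n.
- move=> Hdag g gd f Df.
  have CP : forall f', cfft Dc f' -> cfft Dc (Cdollar anti dollar f').
    by move=> f' Df'; rewrite -(SantiK (Cdollar anti dollar f')); apply: SP; exact: Hdag.
  apply: CP.
  have hup := Ldown_Lup gd.
  have fs : finsupp f by case: Df.
  have := @family C d' n rho omega hrho homega (cfft Dc) Saff
     (Bm d' (-1) *m g) hup.1.1 f fs 1 (-1).
  rewrite BmBm; apply => //.
  + by rewrite oner_eq0.
  + by rewrite oppr_eq0 oner_eq0.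
  move=> k; apply: (hinv _ _ f Df); apply: Lup_Bm_mul => //.
  by rewrite mul1r ltr0n.
Qed.
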